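(* Let $\mathcal{G}$ be a connected $k$-uniform hypergraph with $n$ vertices. Then \[ {\rm diam}(\mathcal{G})\geq\frac{k}{2(k-1)(n-1)\alpha(\mathcal{G})},\qquad {\rm rad}(\mathcal{G})\geq\frac{k}{2(k-1)(n-1)\beta(\mathcal{G})}. \]
   Context: A $k$-uniform hypergraph $\mathcal{G}$ has vertex set $V(\mathcal{G})=[n]$ and edge set $E(\mathcal{G})$ of $k$-element subsets of $V(\mathcal{G})$. A path of length $l$ is an alternating sequence $v_0e_1v_1\cdots e_lv_l$ of distinct vertices and distinct edges with $v_{i-1},v_i\in e_i$; $\mathcal{G}$ is connected if any two vertices are joined by a path. The distance $d(u,v)$ is the length of a shortest path between $u$ and $v$, ${\rm ecc}(v)=\max_{u}d(u,v)$, ${\rm diam}(\mathcal{G})=\max_v{\rm ecc}(v)$, ${\rm rad}(\mathcal{G})=\min_v{\rm ecc}(v)$. For $\mathbf{x}\in\mathbb{R}^n$, $\mathcal{L}_\mathcal{G}\mathbf{x}^k=\sum_{\{i_1,\ldots,i_k\}\in E(\mathcal{G})}\left(x_{i_1}^k+\cdots+x_{i_k}^k-k\,x_{i_1}\cdots x_{i_k}\right)$; the inverse Perron value of vertex $j$ is $\alpha_j(\mathcal{G})=\min\{\mathcal{L}_\mathcal{G}\mathbf{x}^k : \mathbf{x}\in\mathbb{R}^n_+,\ \sum_i x_i^k=1,\ x_j=0\}$; $\alpha(\mathcal{G})=\min_j\alpha_j(\mathcal{G})$ and $\beta(\mathcal{G})=\max_j\alpha_j(\mathcal{G})$. *)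

(* Defs.v *)
From mathcomp Require Import all_boot all_order all_algebra.
From mathcomp Require Import all_classical all_reals.
Set Implicit Arguments. Unset Strict Implicit. Unset Printing Implicit Defensive.
Import Order.TTheory GRing.Theory Num.Theory.

Definition k_uniform (n k : nat) (E : {set {set 'I_n}}) : Prop :=
  forall e, e \in E -> #|e| = k.

(* A path of length l from u to v: v_0 e_1 v_1 ... e_l v_l with distinct
   vertices vs = [v_0;...;v_l] and distinct edges es = [e_1;...;e_l] of E,
   with v_{i-1}, v_i in e_i. *)
Definition is_path (n : nat) (E : {set {set 'I_n}}) (u v : 'I_n) (l : nat)
    (vs : seq 'I_n) (es : seq {set 'I_n}) : Prop :=
  [/\ size es = l, size vs = l.+1, uniq vs & uniq es] /\
  [/\ all (fun e => e \in E) es, head u vs = u, last u vs = v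
    & forall i, (i < l)%N ->
        nth u vs i \in nth finset.set0 es i /\ nth u vs i.+1 \in nth finset.set0 es i].

Definition has_path (n : nat) (E : {set {set 'I_n}}) (u v : 'I_n) (l : nat) : Prop :=
  exists vs es, is_path E u v l vs es.

Definition connected_hg (n : nat) (E : {set {set 'I_n}}) : Prop :=
  forall u v : 'I_n, exists l, has_path E u v l.

(* d(u,v): the length of a shortest path between u and v (0 if none exists,
   which never happens for connected hypergraphs). *)
Definition hdist (n : nat) (E : {set {set 'I_n}}) (u v : 'I_n) : nat :=
  match pselect (exists l, `[< has_path E u v l >]) with
  | left H => ex_minn H
  | right _ => 0%N
  end.

Definition ecc (n : nat) (E : {set {set 'I_n}}) (v : 'I_n) : nat :=
  \max_(u : 'I_n) hdist E u v.

Definition hg_diam (n : nat) (E : {set {set 'I_n}}) : nat :=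
  \max_(v : 'I_n) ecc E v.

(* hg_rad = min_v ecc(v)  (the neutral element hg_diam is >= every ecc(v), so this
   is exactly the minimum over the nonempty vertex set) *)
Definition hg_rad (n : nat) (E : {set {set 'I_n}}) : nat :=
  \big[minn/hg_diam E]_(v : 'I_n) ecc E v.

Local Open Scope ring_scope.

Definition lapl_form (R : realType) (n k : nat) (E : {set {set 'I_n}})
    (x : 'I_n -> R) : R :=
  \sum_(e in E) (\sum_(i in e) x i ^+ k - k%:R * \prod_(i in e) x i).

(* alpha_j(G) = min { L_G x^k : x >= 0, sum_i x_i^k = 1, x_j = 0 }
   (the minimum exists by compactness; we write it as the infimum). *)
Definition alpha_j (R : realType) (n k : nat) (E : {set {set 'I_n}}) (j : 'I_n) : R :=
  inf [set lapl_form k E x | x in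
        [set x : 'I_n -> R | (forall i, 0 <= x i) /\
                              \sum_(i < n) x i ^+ k = 1 /\ x j = 0]].

Definition alpha_hg (R : realType) (n k : nat) (E : {set {set 'I_n}}) : R :=
  inf (range (alpha_j R k E)).
Definition beta_hg (R : realType) (n k : nat) (E : {set {set 'I_n}}) : R :=
  sup (range (alpha_j R k E)).

(* Main.v *)
Require Import Defs.
From mathcomp Require Import all_boot all_order all_algebra.
From mathcomp Require Import all_classical all_reals.
From mathcomp Require Import ring lra.
Import Order.TTheory GRing.Theory Num.Theory.
Local Open Scope ring_scope.


Lemma CS_nat (R : realType) (d : nat -> R) (l : nat) :
  (\sum_(0 <= i < l) d i) ^+ 2 <= l%:R * \sum_(0 <= i < l) d i ^+ 2.
Proof.
elim: l => [|l IH]; first by rewrite !big_geq // expr0n mul0r.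
case: l IH => [|l] IH.
  by rewrite !big_nat1 mul1r.
rewrite !(big_nat_recr l.+1) //= -[l.+2%:R]natr1.
move: IH.
set S := \sum_(0 <= i < l.+1) d i.
set Q := \sum_(0 <= i < l.+1) d i ^+ 2 => IH.
have Q0 : 0 <= Q by rewrite /Q sumr_ge0 // => i _; rewrite sqr_ge0.
have lp : 0 < l.+1%:R :> R by rewrite ltr0n.
move: IH Q0 lp; clearbody S Q; set L := l.+1%:R; set D := d l.+1; clearbody L D => IH Q0 lp.
have H : 0 <= Q + L * D ^+ 2 - 2 * S * D.
  rewrite -(pmulr_rge0 _ lp).
  have h : 0 <= (S - L * D) ^+ 2 by rewrite sqr_ge0.
  nra.
nra.
Qed.

Lemma sum_sub_le (R : realType) (I : finType) (A B : {pred I}) (F : I -> R) :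
  {in B, forall i, 0 <= F i} -> {subset A <= B} ->
  \sum_(i in A) F i <= \sum_(i in B) F i.
Proof.
move=> F0 AB; rewrite [X in _ <= X](bigID (fun i => i \in A)) /=.
have -> : \sum_(i in B | i \in A) F i = \sum_(i in A) F i.
  apply: eq_bigl => i; case: (boolP (i \in A)) => [/AB -> //|]; by rewrite andbF.
rewrite lerDl sumr_ge0 // => i /andP [iB _]; exact: F0.
Qed.

Lemma agm_bound (R : realType) (n k : nat) (e : {set 'I_n}) (x F : 'I_n -> R) :
  (0 < k)%N -> #|e| = k -> (forall i, 0 <= x i) -> {in e, forall i, 0 <= F i} ->
  \prod_(i in e) F i = (\prod_(i in e) x i) ^+ k ->
  k%:R * \prod_(i in e) x i <= \sum_(i in e) F i.
Proof.
move=> k0 ek x0 F0 hp.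
have := (leif_AGM F0).1; rewrite hp ek => H.
have kp : 0 < k%:R :> R by rewrite ltr0n.
have P0 : 0 <= \prod_(i in e) x i by apply: prodr_ge0.
have S0 : 0 <= \sum_(i in e) F i by apply: sumr_ge0.
rewrite ler_pXn2r // ?nnegrE ?divr_ge0 ?ler0n // in H.
by rewrite mulrC -ler_pdivlMr.
Qed.

Set Implicit Arguments. Unset Strict Implicit.


Definition eterm (R : realType) n k (x : 'I_n -> R) (e : {set 'I_n}) :=
  \sum_(i in e) x i ^+ k - k%:R * \prod_(i in e) x i.

Lemma eterm_ge0 (R : realType) n k (x : 'I_n -> R) (e : {set 'I_n}) :
  (0 < k)%N -> #|e| = k -> (forall i, 0 <= x i) -> 0 <= eterm k x e.
Proof.
move=> k0 ek x0; rewrite /eterm subr_ge0.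
apply: agm_bound => //; first by move=> i _; rewrite exprn_ge0.
by rewrite prodrXl.
Qed.

Lemma eterm_pair (R : realType) n k (x : 'I_n -> R) (e : {set 'I_n}) u v :
  (0 < k)%N -> #|e| = k -> (forall i, 0 <= x i) -> u \in e -> v \in e -> u != v ->
  (Num.sqrt (x u ^+ k) - Num.sqrt (x v ^+ k)) ^+ 2 <= eterm k x e.
Proof.
move=> k0 ek x0 ue ve uv.
set yu := Num.sqrt (x u ^+ k); set yv := Num.sqrt (x v ^+ k).
have yu0 : 0 <= yu by rewrite sqrtr_ge0.
have yv0 : 0 <= yv by rewrite sqrtr_ge0.
have yu2 : yu ^+ 2 = x u ^+ k by rewrite sqr_sqrtr // exprn_ge0.
have yv2 : yv ^+ 2 = x v ^+ k by rewrite sqr_sqrtr // exprn_ge0.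
pose F i := if (i == u) || (i == v) then yu * yv else x i ^+ k.
have vu : v != u by rewrite eq_sym.
have hprod : \prod_(i in e) F i = (\prod_(i in e) x i) ^+ k.
  rewrite -prodrXl (bigD1 u) //= [in RHS](bigD1 u) //=.
  rewrite (bigD1 v) /= ?ve ?vu // [in RHS](bigD1 v) /= ?ve ?vu //.
  rewrite /F eqxx /= eqxx orbT.
  rewrite (eq_bigr (fun i => x i ^+ k)); last first.
    by move=> i /andP [/andP [_ /negbTE ->] /negbTE ->].
  rewrite mulrA mulrA; congr (_ * _).
  by rewrite mulrACA -!expr2 yu2 yv2.
have hsum : \sum_(i in e) F i = yu * yv + yu * yv + (\sum_(i in e) x i ^+ k - x u ^+ k - x v ^+ k).
  rewrite (bigD1 u) //= [in RHS](bigD1 u) //=.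
  rewrite (bigD1 v) /= ?ve ?vu // [in RHS](bigD1 v) /= ?ve ?vu //.
  rewrite /F eqxx /= eqxx orbT.
  rewrite (eq_bigr (fun i => x i ^+ k)); last first.
    by move=> i /andP [/andP [_ /negbTE ->] /negbTE ->].
  ring.
have := @agm_bound R n k e x F k0 ek x0.
rewrite hsum /eterm => H.
have : k%:R * \prod_(i in e) x i <=
   yu * yv + yu * yv + (\sum_(i in e) x i ^+ k - x u ^+ k - x v ^+ k).
  apply: H => //; move=> i _; rewrite /F; case: ifP => _; rewrite ?mulr_ge0 ?exprn_ge0 //.
move=> {}H.
rewrite sqrrB yu2 yv2. lra.
Qed.


Lemma path_exists n (E : {set {set 'I_n}}) u j :
  connected_hg E -> exists l, has_path E u j l /\ (l <= ecc E j)%N.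
Proof.
move=> conn; exists (hdist E u j); split; last first.
  by rewrite /ecc; apply/leq_bigmax.
rewrite /hdist; case: pselect => [H|H].
  by case: ex_minnP => m /asboolP hm _.
exfalso; apply: H; have [l hl] := conn u j; exists l; exact/asboolP.
Qed.

Lemma core (R : realType) n k (E : {set {set 'I_n}}) j (x : 'I_n -> R) :
  (2 <= k)%N -> k_uniform k E -> connected_hg E -> (forall i, 0 <= x i) ->
  \sum_(i < n) x i ^+ k = 1 -> x j = 0 ->
  1 <= (n%:R - 1) * (ecc E j)%:R * lapl_form k E x.
Proof.
move=> k2 unif conn x0 xs xj.
have k0 : (0 < k)%N by apply: leq_trans k2.
have L0 : 0 <= lapl_form k E x.
  by apply: sumr_ge0 => e eE; apply: eterm_ge0 => //; apply: unif.
have [u _ umax] : exists2 u, true & forall i, x i ^+ k <= x u ^+ k.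
  case: (@arg_maxP _ _ _ j predT (fun i => x i ^+ k) isT) => u _ h.
  by exists u => // i; apply: h.
have hu : 1 <= (n%:R - 1) * x u ^+ k.
  rewrite -[X in X <= _]xs (bigD1 j) //= xj expr0n (negbTE (lt0n_neq0 k0)) add0r.
  apply: (le_trans (ler_sum _ (fun i _ => umax i))).
  have h : \sum_(i < n) x u ^+ k = x u ^+ k + \sum_(i < n | i != j) x u ^+ k.
    by rewrite (bigD1 j).
  rewrite sumr_const card_ord in h.
  have -> : \sum_(i < n | i != j) x u ^+ k = x u ^+ k *+ n - x u ^+ k.
    by rewrite h; lra.
  rewrite -mulr_natl; lra.

have [l [[vs [es [[hes hvs uvs ues] [allE hh hlast hin]]]] hl]] := path_exists u j conn.
pose y i := Num.sqrt (x i ^+ k).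
pose d i := y (nth u vs i) - y (nth u vs i.+1).
have yj : y j = 0 by rewrite /y xj expr0n (negbTE (lt0n_neq0 k0)) sqrtr0.
have hy : \sum_(0 <= i < l) d i = y u.
  rewrite (telescope_sumr_eq (fun i => - y (nth u vs i))) //; last first.
    by move=> i _; rewrite /d opprK addrC.
  have -> : nth u vs l = j by rewrite -hlast -nth_last hvs.
  have -> : nth u vs 0 = u by rewrite nth0.
  by rewrite yj oppr0 sub0r opprK.
have yu2 : y u ^+ 2 = x u ^+ k by rewrite sqr_sqrtr // exprn_ge0.
have cs := @CS_nat R d l.
rewrite hy yu2 in cs.
have hd : \sum_(0 <= i < l) d i ^+ 2 <= \sum_(0 <= i < l) eterm k x (nth finset.set0 es i).
  rewrite big_nat_cond [X in _ <= X]big_nat_cond; apply: ler_sum => i /andP [/andP [_ il] _].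
  have eE : nth finset.set0 es i \in E by apply: (allP allE); rewrite mem_nth // hes.
  have [h1 h2] := hin i il.
  apply: eterm_pair => //; first exact: unif.
  rewrite nth_uniq ?hvs ?ltnS ?(ltnW il) //; by rewrite neq_ltn ltnSn.
have hE : \sum_(0 <= i < l) eterm k x (nth finset.set0 es i) <= lapl_form k E x.
  have -> : \sum_(0 <= i < l) eterm k x (nth finset.set0 es i) = \sum_(e <- es) eterm k x e.
    by rewrite (big_nth finset.set0) hes.
  rewrite big_uniq //; apply: sum_sub_le.
    by move=> e eE; apply: eterm_ge0 => //; apply: unif.
  by move=> e /(allP allE).
have n1 : 0 <= n%:R - 1 :> R.
  by rewrite subr_ge0 ler1n (leq_ltn_trans (leq0n _) (ltn_ord j)).
have hl' : l%:R <= (ecc E j)%:R :> R by rewrite ler_nat.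
have Q0 : 0 <= \sum_(0 <= i < l) d i ^+ 2 by apply: sumr_ge0 => i _; apply: sqr_ge0.
have := le_trans hd hE => hdE.
have l0 : 0 <= l%:R :> R by [].
have h3 : x u ^+ k <= l%:R * lapl_form k E x.
  apply: (le_trans cs); apply: ler_wpM2l => //.
have h4 : x u ^+ k <= (ecc E j)%:R * lapl_form k E x.
  apply: (le_trans h3); apply: ler_wpM2r => //.
apply: (le_trans hu); rewrite -mulrA; apply: ler_wpM2l => //.
Qed.


Lemma final_ineq (R : realType) (K M Dr a : R) : 2 <= K -> 0 < M -> 0 <= Dr ->
  1 <= M * Dr * a -> K / (2 * (K - 1) * M * a) <= Dr.
Proof.
move=> K2 M0 D0 h.
have a0 : 0 < a.
  rewrite ltNge; apply/negP => a0.
  have : M * Dr * a <= 0 by rewrite mulr_ge0_le0 // mulr_ge0 // ltW.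
  lra.
have den : 0 < 2 * (K - 1) * M * a by rewrite !mulr_gt0 //; lra.
rewrite ler_pdivrMr //.
have h2 : (K - 1) * 1 <= (K - 1) * (M * Dr * a) by rewrite ler_wpM2l //; lra.
have -> : Dr * (2 * (K - 1) * M * a) = 2 * ((K - 1) * (M * Dr * a)) by ring.
lra.
Qed.

Lemma lapl_le_card (R : realType) n k (E : {set {set 'I_n}}) (x : 'I_n -> R) :
  (forall i, 0 <= x i) -> \sum_(i < n) x i ^+ k = 1 -> lapl_form k E x <= #|E|%:R.
Proof.
move=> x0 xs; rewrite -sumr_const /lapl_form; apply: ler_sum => e _.
have P0 : 0 <= k%:R * \prod_(i in e) x i by rewrite mulr_ge0 // prodr_ge0.
have : \sum_(i in e) x i ^+ k <= 1.
  rewrite -xs [X in _ <= X](bigID (mem e)) /= lerDl sumr_ge0 // => i _.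
  exact: exprn_ge0.
lra.
Qed.

Unset Implicit Arguments.


Lemma alpha_facts (R : realType) n k (E : {set {set 'I_n.+2}}) (j : 'I_n.+2) :
  (2 <= k)%N -> k_uniform k E -> connected_hg E ->
  [/\ 0 <= alpha_j R k E j, alpha_j R k E j <= #|E|%:R &
      1 <= (n.+2%:R - 1) * (ecc E j)%:R * alpha_j R k E j].
Proof.
move=> k2 unif conn.
have k0 : (0 < k)%N by apply: leq_trans k2.
rewrite /alpha_j; set S := (X in inf X).

pose u : 'I_n.+2 := if j == ord0 then ord_max else ord0.
have uj : u != j.
  rewrite /u; case: ifP => [/eqP -> //|/negbT]; by rewrite eq_sym.
pose x0 : 'I_n.+2 -> R := fun i => if i == u then 1 else 0.
have x0f : (forall i, 0 <= x0 i) /\ \sum_(i < n.+2) x0 i ^+ k = 1 /\ x0 j = 0.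
  split; first by move=> i; rewrite /x0; case: ifP.
  split; last by rewrite /x0 eq_sym (negbTE uj).
  rewrite (bigD1 u) //= /x0 eqxx expr1n big1 ?addr0 // => i /negbTE ->.
  by rewrite expr0n (negbTE (lt0n_neq0 k0)).
have Sne : (S !=set0)%classic by exists (lapl_form k E x0); exists x0.
have Slb : lbound S 0.
  move=> z [x [xp _] <-]; apply: sumr_ge0 => e eE; apply: eterm_ge0 => //.
  exact: unif.
have hlb : has_lbound S by exists 0.
have a0 : 0 <= alpha_j R k E j by apply: lb_le_inf.
have aub : alpha_j R k E j <= #|E|%:R.
  apply: le_trans (lapl_le_card E x0f.1 x0f.2.1).
  by apply: ge_inf => //; exists x0.
split => //.
have c0 := core k2 unif conn x0f.1 x0f.2.1 x0f.2.2.
set P := (n.+2%:R - 1) * (ecc E j)%:R in c0 *.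
have P0 : 0 <= P by rewrite /P mulr_ge0 // subr_ge0 ler1n.
have Pp : 0 < P.
  rewrite lt_def P0 andbT; apply/negP => /eqP P00.
  by move: c0; rewrite P00 mul0r ler10.
have : P^-1 <= inf S.
  apply: lb_le_inf => // z [x [xp [xs xj]] <-].
  rewrite -[P^-1]mulr1 ler_pdivrMl //.
  exact: core.
by rewrite -[P^-1]mulr1 ler_pdivrMl.
Qed.

Theorem corollary3p5 (R : realType) (n k : nat) (E : {set {set 'I_n}}) :
  (2 <= k)%N -> k_uniform k E -> connected_hg E ->
  (hg_diam E)%:R >= k%:R / (2 * (k%:R - 1) * (n%:R - 1) * alpha_hg R k E) :> R /\
  (hg_rad E)%:R >= k%:R / (2 * (k%:R - 1) * (n%:R - 1) * beta_hg R k E) :> R.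
Proof.
move=> k2.
case: n E => [|[|n]] E unif conn.
- rewrite /alpha_hg /beta_hg.
  have -> : range (alpha_j R k E) = set0.
    by apply/seteqP; split => z // [[i]].
  by rewrite inf0 sup0 !mulr0 invr0 !mulr0.
- by rewrite subrr !mulr0 !mul0r invr0 !mulr0.
have K2 : 2 <= k%:R :> R by rewrite ler_nat.
have M0 : 0 < n.+2%:R - 1 :> R by rewrite subr_gt0 ltr1n.
have hf := fun j => @alpha_facts R n k E j k2 unif conn.
have rne : (range (alpha_j R k E) !=set0)%classic by exists (alpha_j R k E ord0); exists ord0.
split.
- apply: final_ineq => //.
  set D := hg_diam E.
  have eD : forall j, (ecc E j <= D)%N by move=> j; rewrite /D /hg_diam; apply/leq_bigmax.
  have hD : forall j, 1 <= (n.+2%:R - 1) * D%:R * alpha_j R k E j.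
    move=> j; have [a0 _ h] := hf j; apply: (le_trans h).
    apply: ler_wpM2r => //; apply: ler_wpM2l; first exact: ltW.
    by rewrite ler_nat.
  have Dp : 0 < (n.+2%:R - 1) * D%:R :> R.
    have [a0 _ h] := hf ord0; have := hD ord0.
    rewrite lt_def mulr_ge0 ?ler0n ?andbT ?(ltW M0) //.
    by apply: contraTN => /eqP ->; rewrite mul0r ler10.
  have : ((n.+2%:R - 1) * D%:R)^-1 <= alpha_hg R k E.
    apply: lb_le_inf => // z [j _ <-].
    by rewrite -[_^-1]mulr1 ler_pdivrMl // mulrA hD.
  by rewrite -[_^-1]mulr1 ler_pdivrMl.
- apply: final_ineq => //.
  pose j0 := [arg min_(i < ord0) ecc E i].
  have hj0 : forall j, (ecc E j0 <= ecc E j)%N.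
    by move=> j; rewrite /j0; case: arg_minnP => // i _ h; apply: h.
  have rad : (ecc E j0 <= hg_rad E)%N.
    rewrite /hg_rad; apply: (big_ind (fun m => ecc E j0 <= m)%N) => //.
      by rewrite /hg_diam; apply/leq_bigmax.
    by move=> a b ha hb; rewrite leq_min ha hb.
  have [a0 aub h] := hf j0.
  have hub : has_ubound (range (alpha_j R k E)).
    by exists #|E|%:R => z [j _ <-]; have [_ ? _] := hf j.
  have hb : alpha_j R k E j0 <= beta_hg R k E.
    by apply: ub_le_sup => //; exists j0.
  apply: (le_trans h); rewrite -mulrA -[X in _ <= X]mulrA; apply: ler_wpM2l; first exact: ltW.
  apply: le_trans (ler_wpM2l _ hb) _; first by rewrite ler0n.
  apply: ler_wpM2r; first by apply: le_trans hb.
  by rewrite ler_nat.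
Qed.
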